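(* Let $F:\mathbb{R}^d\to\mathbb{R}$ be any differentiable function. Suppose that for all $t\ge1$, $\mathbb{E}[g_t\mid\mathcal{F}_t]=\nabla F(x_t)$, $\|g_t\|\le G$ almost surely, and the learning rate $\eta_t$ is a non-negative $\mathcal{F}_t$-measurable random variable. Assume the regularizers $\phi_1,\phi_2,\dots$ are convex and differentiable, the minimizers defining $x_t$ exist, $\phi_1$ attains its minimum, all expectations below are finite, and for all $t\ge1$ $$H_t(x_t)-H_{t+1}(x_{t+1})+\langle\ell_t,x_t\rangle\le0 .$$ Then FTRL with rescaled gradients satisfies for all $T\ge0$ and all $u\in\mathbb{R}^d$: $$\mathbb{E}[B_{\phi_{T+1}}(u,x_{T+1})]+\sum_{t=1}^T\mathbb{E}\big[\eta_t\langle\nabla F(x_t),x_t-u\rangle\big]\le \mathbb{E}[\phi_{T+1}(u)]-\min_{x\in\mathbb{R}^d}\phi_1(x).$$ In particular $\sum_{t=1}^T\mathbb{E}[\eta_t\langle\nabla F(x_t),x_t-u\rangle]\le\mathbb{E}[\phi_{T+1}(u)]-\min_x\phi_1(x)$, and if there exists $x^*$ with $\langle\nabla F(x),x-x^*\rangle\ge0$ for all $x\in\mathbb{R}^d$, then $\mathbb{E}[B_{\phi_{T+1}}(x^*,x_{T+1})]\le\mathbb{E}[\phi_{T+1}(x^* )]-\min_x\phi_1(x)$.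
   Context: $\|\cdot\|$ is the Euclidean norm, $G>0$. Iterates $x_1,x_2,\dots$ and random vectors $g_t$ (received after $x_t$); $\mathcal{F}_t$ is the $\sigma$-algebra generated by $x_1,\dots,x_t,g_1,\dots,g_{t-1}$. For differentiable $f$, $B_f(x,y)=f(x)-f(y)-\langle\nabla f(y),x-y\rangle$. FTRL with rescaled gradients (initial point $0$): given regularizers $\phi_t:\mathbb{R}^d\to\mathbb{R}$ ($\phi_t$ and $\eta_t$ may depend on $g_1,\dots,g_{t-1}$, i.e. are $\mathcal{F}_t$-measurable), set $\theta_0=0$; for $t=1,2,\dots$: $x_t\in\arg\min_{x}H_t(x)$ where $H_t(x)=\phi_t(x)-\langle\theta_{t-1},x\rangle$; receive $g_t$; $\ell_t=\eta_tg_t$; $\theta_t=\theta_{t-1}-\ell_t$. *)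

(* Defs.v *)
From HB Require Import structures.
From mathcomp Require Import all_boot all_order all_algebra.
From mathcomp Require Import all_classical all_reals all_analysis.
Set Implicit Arguments. Unset Strict Implicit. Unset Printing Implicit Defensive.
Import Order.TTheory GRing.Theory Num.Theory.
Import numFieldNormedType.Exports.
Local Open Scope classical_set_scope.
Local Open Scope ring_scope.

Section Defs.
Variable R : realType.

Definition dotv (d : nat) (u v : 'rV[R]_d) : R := \sum_(i < d) u ord0 i * v ord0 i.

Definition enorm (d : nat) (u : 'rV[R]_d) : R := Num.sqrt (dotv u u).

Definition grad (d : nat) (f : 'rV[R]_d -> R) (y : 'rV[R]_d) : 'rV[R]_d :=
  \row_(i < d) ('d f y (delta_mx ord0 i : 'rV[R]_d)).

Definition bregman (d : nat) (f : 'rV[R]_d -> R) (x y : 'rV[R]_d) : R :=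
  f x - f y - dotv (grad f y) (x - y).

Definition convex_fun (d : nat) (f : 'rV[R]_d -> R) : Prop :=
  forall (x y : 'rV[R]_d) (l : R), 0 <= l -> l <= 1 ->
    f (l *: x + (1 - l) *: y) <= l * f x + (1 - l) * f y.

(* minimum value of a function (used when the minimum is attained) *)
Definition minval (d : nat) (f : 'rV[R]_d -> R) : R := inf (range f).

(* FTRL with rescaled gradients: theta_t = theta_{t-1} - eta_t g_t, theta_0 = 0 *)
Definition theta (T : Type) (d : nat) (eta : nat -> T -> R)
  (g : nat -> T -> 'rV[R]_d) (t : nat) (w : T) : 'rV[R]_d :=
  - \sum_(1 <= s < t.+1) (eta s w *: g s w).

Definition Hfun (T : Type) (d : nat) (phi : nat -> T -> 'rV[R]_d -> R)
  (eta : nat -> T -> R) (g : nat -> T -> 'rV[R]_d) (t : nat) (w : T)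
  (x : 'rV[R]_d) : R :=
  phi t w x - dotv (theta eta g t.-1 w) x.

Section Prob.
Context {dO : measure_display} {O : measurableType dO}.

Definition gen_sigma (fs : set (O -> R)) : set (set O) :=
  <<s [set A | exists f, fs f /\ exists B : set R, measurable B /\ A = f @^-1` B] >>.

Definition filt (d : nat) (x g : nat -> O -> 'rV[R]_d) (t : nat) : set (set O) :=
  gen_sigma [set f | exists s (i : 'I_d),
     ((1 <= s <= t)%N /\ f = (fun w => x s w ord0 i)) \/
     ((1 <= s < t)%N /\ f = (fun w => g s w ord0 i))].

Definition measurable_wrt (F : set (set O)) (f : O -> R) : Prop :=
  forall B : set R, measurable B -> F (f @^-1` B).

Definition is_cond_exp (P : probability O R) (F : set (set O)) (X Y : O -> R) : Prop :=
  P.-integrable setT (fun w => (X w)%:E) /\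
  measurable_wrt F Y /\
  forall A, F A ->
    (\int[P]_(w in A) (X w)%:E = \int[P]_(w in A) (Y w)%:E)%E.

End Prob.
End Defs.

(* Main.v *)
Require Import Defs.
From HB Require Import structures.
From mathcomp Require Import all_boot all_order all_algebra.
From mathcomp Require Import all_classical all_reals all_analysis.
Import Order.TTheory GRing.Theory Num.Theory.
Import numFieldNormedType.Exports.
Local Open Scope classical_set_scope.
Local Open Scope ring_scope.

From mathcomp Require Import lra.
Import measurable_realfun.
Import HBNNSimple.

Section S.
Context {R : realType}.

Lemma dotv_delta d (a : 'rV[R]_d) i : dotv a (delta_mx ord0 i) = a ord0 i.
Proof.
rewrite /dotv (bigD1 i) //= mxE !eqxx mulr1 big1 ?addr0 // => j ji.
by rewrite mxE (negbTE ji) andbF mulr0.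
Qed.


Lemma dotvDr d (a b c : 'rV[R]_d) : dotv a (b + c) = dotv a b + dotv a c.
Proof. by rewrite /dotv -big_split /=; apply: eq_bigr => j _; rewrite mxE mulrDr. Qed.
Lemma dotvDl d (a b c : 'rV[R]_d) : dotv (a + b) c = dotv a c + dotv b c.
Proof. by rewrite /dotv -big_split /=; apply: eq_bigr => j _; rewrite mxE mulrDl. Qed.
Lemma dotvZr d (a b : 'rV[R]_d) r : dotv a (r *: b) = r * dotv a b.
Proof. by rewrite /dotv mulr_sumr; apply: eq_bigr => j _; rewrite mxE mulrCA. Qed.
Lemma dotvZl d (a b : 'rV[R]_d) r : dotv (r *: a) b = r * dotv a b.
Proof. by rewrite /dotv mulr_sumr; apply: eq_bigr => j _; rewrite mxE mulrA. Qed.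
Lemma dotvNr d (a b : 'rV[R]_d) : dotv a (- b) = - dotv a b.
Proof. by rewrite -scaleN1r dotvZr mulN1r. Qed.
Lemma dotvNl d (a b : 'rV[R]_d) : dotv (- a) b = - dotv a b.
Proof. by rewrite -scaleN1r dotvZl mulN1r. Qed.
Lemma dotvBr d (a b c : 'rV[R]_d) : dotv a (b - c) = dotv a b - dotv a c.
Proof. by rewrite dotvDr dotvNr. Qed.
Lemma dotv_suml d (I : Type) (r : seq I) (P : pred I) (F : I -> 'rV[R]_d) b :
  dotv (\sum_(j <- r | P j) F j) b = \sum_(j <- r | P j) dotv (F j) b.
Proof.
elim/big_rec2: _ => [|j y1 y2 _ <-]; last by rewrite dotvDl.
by rewrite /dotv big1 // => j _; rewrite mxE mul0r.
Qed.

Lemma grad_min d (f : 'rV[R]_d -> R) (th xm : 'rV[R]_d) :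
  (forall y, differentiable f y) ->
  (forall y, f xm - dotv th xm <= f y - dotv th y) -> grad f xm = th.
Proof.
move=> df hm; apply/rowP => i; rewrite mxE.
set v : 'rV[R]_d := delta_mx ord0 i.
pose q (s : R) := f (s *: v + xm).
have dq t : differentiable q t.
  apply: differentiable_comp => //.
pose c := th ord0 i.
pose lin := c \*o (@id R).
have dlin t : derivable lin t 1 by apply: derivableM.
pose k := q - lin.
have dk t : derivable k t 1.
  by apply: derivableB => //; apply: diff_derivable.
have Dk0 : 'D_1 k 0 = 0.
  apply: derive_val.
  apply: (@derive1_at_min _ k (-1) 1 0) => //.
  - by rewrite in_itv /= ltrN10 ltr01.
  move=> t _.
  have := hm (t *: v + xm).
  rewrite /k /q /lin /= => hh; change ((f (0 *: v + xm) - c * 0) <= (f (t *: v + xm) - c * t)); move: hh.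
  rewrite scale0r add0r mulr0 subr0 dotvDr dotvZr /v dotv_delta -/c.
  lra.
have Dq : 'D_1 q 0 = 'D_v f xm.
  rewrite /derive.
  have -> : (fun h : R => h^-1 *: (q (h *: 1 + 0) - q 0)) = (fun h => h^-1 *: (f (h *: v + xm) - f xm)).
    by apply: funext => h; rewrite /q scale0r add0r addr0 [h *: 1]mulr1.
  by [].
have Dlin : 'D_1 lin 0 = c.
  by rewrite deriveMl // derive_id mulr1.
move: Dk0; rewrite deriveB //; last exact: diff_derivable.
rewrite Dq Dlin deriveE // => /eqP; rewrite subr_eq0 => /eqP ->.
by rewrite /c.
Qed.


Lemma pw_ineq (O : Type) (d : nat)
  (x g : nat -> O -> 'rV[R]_d) (eta : nat -> O -> R)
  (phi : nat -> O -> 'rV[R]_d -> R) (phi1 : 'rV[R]_d -> R) (T : nat) (u : 'rV[R]_d) (w : O) :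
  (forall w, phi 1%N w = phi1) ->
  (forall t, (1 <= t)%N -> forall w y, differentiable (phi t w) y) ->
  (forall t, (1 <= t)%N -> forall w y,
     Hfun phi eta g t w (x t w) <= Hfun phi eta g t w y) ->
  (exists x0, forall y, phi1 x0 <= phi1 y) ->
  (forall t, (1 <= t)%N -> forall w,
     Hfun phi eta g t w (x t w) - Hfun phi eta g t.+1 w (x t.+1 w)
       + dotv (eta t w *: g t w) (x t w) <= 0) ->
  0 <= bregman (phi T.+1 w) u (x T.+1 w) /\
  bregman (phi T.+1 w) u (x T.+1 w) + \sum_(1 <= t < T.+1) eta t w * dotv (g t w) (x t w - u)
    <= phi T.+1 w u - minval phi1.
Proof.
move=> phi1E dphi hmin [x0 hx0] htel.
have gr : grad (phi T.+1 w) (x T.+1 w) = theta eta g T w.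
  apply: grad_min; first exact: dphi.
  by move=> y; have := hmin T.+1 isT w y; rewrite /Hfun.
have eB : bregman (phi T.+1 w) u (x T.+1 w) =
    Hfun phi eta g T.+1 w u - Hfun phi eta g T.+1 w (x T.+1 w).
  rewrite /bregman gr /Hfun /= dotvBr; lra.
have tele : forall n, Hfun phi eta g 1 w (x 1 w) - Hfun phi eta g n.+1 w (x n.+1 w)
    + \sum_(1 <= t < n.+1) dotv (eta t w *: g t w) (x t w) <= 0.
  elim=> [|n ih]; first by rewrite big_geq // subrr addr0.
  rewrite big_nat_recr //=.
  have := htel n.+1 isT w; lra.
have H1 : Hfun phi eta g 1 w (x 1 w) = phi1 (x 1 w).
  by rewrite /Hfun phi1E /theta big_geq // oppr0 /dotv big1 ?subr0 // => j _; rewrite mxE mul0r.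
have hinf : minval phi1 <= phi1 (x 1 w).
  apply: ge_inf; last by exists (x 1 w).
  by exists (phi1 x0) => _ [y _ <-].
have eS : \sum_(1 <= t < T.+1) eta t w * dotv (g t w) (x t w - u) =
   \sum_(1 <= t < T.+1) dotv (eta t w *: g t w) (x t w) + dotv (theta eta g T w) u.
  rewrite /theta dotvNl dotv_suml -sumrB; apply: eq_bigr => t _.
  by rewrite dotvBr dotvZl dotvZl mulrBr.
split; first by rewrite eB subr_ge0; exact: hmin.
rewrite eB eS; have := tele T; move: (hmin T.+1 isT w u) hinf; rewrite H1 /Hfun /=; lra.
Qed.
End S.

Section H2.
Context {R : realType}.
Lemma integral_sum_nat (dO : measure_display) (O : measurableType dO)
  (mu : {measure set O -> \bar R}) (m n : nat) (f : nat -> O -> \bar R) :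
  (forall k, (m <= k < n)%N -> mu.-integrable setT (f k)) ->
  (\int[mu]_w (\sum_(m <= k < n) f k w) = \sum_(m <= k < n) \int[mu]_w f k w)%E.
Proof.
move=> hf.
pose f' k := if (m <= k < n)%N then f k else (fun=> 0%E).
have e1 : forall w, (\sum_(m <= k < n) f k w = \sum_(m <= k < n) f' k w)%E.
  by move=> w; apply: eq_big_nat => k hk; rewrite /f' hk.
rewrite (eq_integral (fun w => \sum_(m <= k < n) f' k w)%E); last by move=> w _; exact: e1.
rewrite integral_sum //; last first.
  move=> k; rewrite /f'; case: ifP => hk; first exact: hf.
  exact: integrable0.
apply: eq_big_nat => k hk; by rewrite /f' hk.
Qed.

Lemma integrable_sum_nat (dO : measure_display) (O : measurableType dO)
  (mu : {measure set O -> \bar R}) (m n : nat) (f : nat -> O -> \bar R) :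
  (forall k, (m <= k < n)%N -> mu.-integrable setT (f k)) ->
  mu.-integrable setT (fun w => \sum_(m <= k < n) f k w)%E.
Proof.
move=> hf.
pose f' k := if (m <= k < n)%N then f k else (fun=> 0%E).
have e1 : (fun w => \sum_(m <= k < n) f k w)%E = (fun w => \sum_(m <= k < n) f' k w)%E.
  by apply: funext => w; apply: eq_big_nat => k hk; rewrite /f' hk.
rewrite e1; apply: integrable_sum => // k _.
rewrite /f'; case: ifP => hk; first exact: hf.
exact: integrable0.
Qed.

End H2.

Section CE.
Context {R : realType} {dO : measure_display} {O : measurableType dO} (P : probability O R) (G0 : set (set O)).
Hypothesis HG : G0 `<=` measurable.
Local Notation FT := (g_sigma_algebraType G0).

Lemma Fs_meas (A : set O) : <<s G0>> A -> measurable A.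
Proof. by apply: smallest_sub => //; exact: sigma_algebra_measurable. Qed.

Lemma wrt_FT (h : O -> R) : measurable_wrt <<s G0>> h ->
  measurable_fun (setT : set FT) (h : FT -> R).
Proof. by move=> hm _ B mB; rewrite setTI; exact: hm. Qed.

Lemma FT_O (h : FT -> R) : measurable_fun setT h -> measurable_fun (setT : set O) (h : O -> R).
Proof.
move=> hm _ B mB; rewrite setTI; apply: Fs_meas.
by have := hm measurableT B mB; rewrite setTI.
Qed.

Lemma FT_Oset (A : set FT) : measurable A -> measurable (A : set O).
Proof. exact: Fs_meas. Qed.

Lemma cond_Yint X Y : is_cond_exp P <<s G0>> X Y -> P.-integrable setT (fun w => (Y w)%:E).
Proof.
move=> [iX [mY hc]].
have mYO : measurable_fun setT Y by apply: FT_O; exact: wrt_FT.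
apply/integrableP; split; first exact/measurable_realfun.measurable_EFinP.
rewrite integral_fin_num_abs //.
have := hc setT (@measurableT _ FT).
move=> <-.
move/integrableP: iX => [mX ?]; rewrite -integral_fin_num_abs //; exact/measurable_realfun.measurable_EFinP.
Qed.

Lemma mEF (g : O -> R) : measurable_fun setT g -> measurable_fun setT (fun w => (g w)%:E).
Proof. by move=> mg; exact: (proj2 (measurable_EFinP setT g) mg). Qed.
Lemma mEF' (g : O -> R) : measurable_fun setT (fun w => (g w)%:E) -> measurable_fun setT g.
Proof. by move=> mg; exact: (proj1 (measurable_EFinP setT g) mg). Qed.

Lemma int_indic (f : O -> R) (A : set O) : measurable A ->
  (\int[P]_w (\1_A w * f w)%:E = \int[P]_(w in A) (f w)%:E)%E.
Proof.
move=> mA; rewrite [RHS]integral_mkcond; apply: eq_integral => w _.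
rewrite patchE indicE; case: (w \in A) => /=; by rewrite ?mul1r ?mul0r.
Qed.

Lemma meas_indicX (f : O -> R) (A : set O) : measurable A -> measurable_fun setT f ->
  measurable_fun setT (fun w => \1_A w * f w).
Proof. by move=> mA mf; apply: measurable_funM => //; exact: measurable_indic. Qed.

Lemma int_indicX (f : O -> R) (A : set O) : measurable A ->
  P.-integrable setT (fun w => (f w)%:E) -> P.-integrable setT (fun w => (\1_A w * f w)%:E).
Proof.
move=> mA iF; have mf := iF; move/integrableP: mf => [/mEF' mf _]; apply: le_integrable iF => //.
- apply: mEF; apply: meas_indicX => //.
- move=> w _; rewrite !abse_EFin lee_fin normrM indicE.
  by case: (w \in A); rewrite /= ?normr1 ?normr0 ?mul1r ?mul0r.
Qed.

Lemma cond_indic X Y : is_cond_exp P <<s G0>> X Y -> forall A : set FT, measurable A ->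
  (\int[P]_w (\1_A w * X w)%:E = \int[P]_w (\1_A w * Y w)%:E)%E.
Proof.
move=> hc A mA; rewrite !int_indic //; try exact: FT_Oset.
by case: hc => _ [_ hc]; exact: hc.
Qed.

Lemma cond_sfun X Y : is_cond_exp P <<s G0>> X Y -> forall s : {nnsfun FT >-> R},
  (\int[P]_w (s (w : FT) * X w)%:E = \int[P]_w (s (w : FT) * Y w)%:E)%E.
Proof.
move=> hc s.
have iX : P.-integrable setT (fun w => (X w)%:E) by case: hc.
have iY := cond_Yint _ _ hc.
set S := finmap.enum_fset (fset_set (range s)).
have mB i : measurable (s @^-1` [set S`_i] : set FT).
  by rewrite -[X in measurable X]setTI; apply: measurable_funP => //; exact: measurable_set1.
have dec (Z : O -> R) : (fun w => (s (w : FT) * Z w)%:E) =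
    (fun w => \sum_(i < size S) (S`_i)%:E * (\1_(s @^-1` [set S`_i]) w * Z w)%:E)%E.
  apply: funext => w; rewrite (fimfunEord s w) -/S mulr_suml sumEFin.
  by congr (_%:E); apply: eq_bigr => i _; rewrite mulrA.
rewrite (dec X) (dec Y) !integral_sum //; last first.
- by move=> i; apply: integrableZl => //; apply: int_indicX => //; exact: FT_Oset.
- by move=> i; apply: integrableZl => //; apply: int_indicX => //; exact: FT_Oset.
apply: eq_bigr => i _; rewrite !integralZl //; last first.
- by apply: int_indicX => //; exact: FT_Oset.
- by apply: int_indicX => //; exact: FT_Oset.
by rewrite (cond_indic _ _ hc _ (mB i)).
Qed.

Section Pos.
Variables (X Y : O -> R) (hc : is_cond_exp P <<s G0>> X Y) (h : O -> R).
Hypothesis hF : measurable_wrt <<s G0>> h.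
Hypothesis h0 : forall w, 0 <= h w.

Let mhF : measurable_fun (setT : set FT) (EFin \o (h : FT -> R)).
Proof. by apply: measurableT_comp => //; exact: wrt_FT. Qed.

Let f0 : forall x : FT, setT x -> (0 <= (EFin \o (h : FT -> R)) x)%E.
Proof. by move=> x _; rewrite lee_fin. Qed.

Let s := nnsfun_approx (@measurableT _ FT) mhF.

Let s_le n w : 0 <= s n w <= h w.
Proof.
apply/andP; split => //.
have := @le_approx _ FT R setT (EFin \o (h : FT -> R)) n w f0 I.
by rewrite /s nnsfun_approxE lee_fin.
Qed.

Let dct (Z : O -> R) : measurable_fun setT Z ->
  P.-integrable setT (fun w => (h w * Z w)%:E) ->
  (\int[P]_w (s n (w : FT) * Z w)%:E)%E @[n --> \oo] --> (\int[P]_w (h w * Z w)%:E)%E.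
Proof.
move=> mZ ihZ.
have h1 : forall n, measurable_fun setT (fun w : O => (s n (w : FT) * Z w)%:E).
  move=> n; apply: mEF; apply: measurable_funM => //.
  by apply: FT_O; exact: measurable_funP.
have h2 : measurable_fun setT (fun w => (h w * Z w)%:E) by move/integrableP: ihZ => [].
have h3 : {ae P, forall w, setT w -> (fun n => (s n (w : FT) * Z w)%:E) n @[n --> \oo] --> (h w * Z w)%:E}.
  apply: aeW => w _.
  rewrite (_ : (fun n => _) = (fun n => (s n (w : FT))%:E * (Z w)%:E)%E); last first.
    by apply: funext => n; rewrite EFinM.
  rewrite EFinM; apply: cvgeM; first exact: mule_def_fin.
    exact: (@cvg_nnsfun_approx _ FT R setT measurableT _ mhF f0 w I).
  exact: cvg_cst.
have h4 : P.-integrable setT (fun w => `|(h w * Z w)%:E|)%E by exact: integrable_abse.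
have h5 : {ae P, forall w n, setT w -> (`|(s n (w : FT) * Z w)%:E| <= `|(h w * Z w)%:E|)%E}.
  apply: aeW => w n _; rewrite !abse_EFin lee_fin !normrM ler_wpM2r //.
  have /andP[s0 sh] := s_le n w.
  by rewrite !ger0_norm.
by case: (@dominated_convergence _ O R P setT measurableT _ _ _ h1 h2 h3 h4 h5).
Qed.

Lemma cond_pos_main : P.-integrable setT (fun w => (h w * X w)%:E) ->
  P.-integrable setT (fun w => (h w * Y w)%:E) ->
  (\int[P]_w (h w * X w)%:E = \int[P]_w (h w * Y w)%:E)%E.
Proof.
move=> iX iY.
have mX : measurable_fun setT X.
  by case: hc => /integrableP [/mEF' ? _] _.
have mY : measurable_fun setT Y.
  by apply: mEF'; move/integrableP: (cond_Yint _ _ hc) => [].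
have cX := dct _ mX iX.
have cY := dct _ mY iY.
have e : (fun n => \int[P]_w (s n (w : FT) * X w)%:E)%E = (fun n => \int[P]_w (s n (w : FT) * Y w)%:E)%E.
  by apply: funext => n; exact: cond_sfun.
rewrite e in cX; exact: (cvg_unique _ cX cY).
Qed.
End Pos.

Lemma FT_wrt (f : FT -> R) : measurable_fun setT f -> measurable_wrt <<s G0>> (f : O -> R).
Proof. by move=> mf B mB; have := mf measurableT B mB; rewrite setTI. Qed.

Lemma wrt_O (f : O -> R) : measurable_wrt <<s G0>> f -> measurable_fun setT f.
Proof. by move=> hf; apply: FT_O; exact: wrt_FT. Qed.

Lemma int_dom (g h Z : O -> R) : measurable_fun setT g -> measurable_fun setT Z ->
  (forall w, `|g w| <= `|h w|) ->
  P.-integrable setT (fun w => (h w * Z w)%:E) -> P.-integrable setT (fun w => (g w * Z w)%:E).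
Proof.
move=> mg mZ gh ih; apply: le_integrable ih => //.
- by apply: mEF; exact: measurable_funM.
- by move=> w _; rewrite !abse_EFin lee_fin !normrM ler_wpM2r.
Qed.

Lemma cond_gen X Y : is_cond_exp P <<s G0>> X Y -> forall h : O -> R,
  measurable_wrt <<s G0>> h ->
  P.-integrable setT (fun w => (h w * X w)%:E) ->
  P.-integrable setT (fun w => (h w * Y w)%:E) ->
  (\int[P]_w (h w * X w)%:E = \int[P]_w (h w * Y w)%:E)%E.
Proof.
move=> hc h hF iX iY.
have mX : measurable_fun setT X.
  by case: hc => /integrableP [/mEF' ? _] _.
have mY : measurable_fun setT Y.
  by apply: mEF'; move/integrableP: (cond_Yint _ _ hc) => [].
pose hp w := Num.max (h w) 0.
pose hn w := Num.max (0 - h w) 0.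
have hpF : measurable_fun (setT : set FT) (hp : FT -> R).
  exact: (@measurable_maxr _ FT R setT (h : FT -> R) (cst 0) (wrt_FT _ hF) (measurable_cst _)).
have hnF : measurable_fun (setT : set FT) (hn : FT -> R).
  exact: (@measurable_maxr _ FT R setT (cst 0 \- (h : FT -> R)) (cst 0)
     (measurable_funB (measurable_cst _) (wrt_FT _ hF)) (measurable_cst _)).
have mx (a : R) : Num.max a 0 = (if 0 <= a then a else 0).
  by case: (leP 0 a).
have e w : h w = hp w - hn w.
  rewrite /hp /hn !mx; case: ifP; case: ifP => /=; lra.
have bp w : `|hp w| <= `|h w|.
  rewrite /hp mx; case: ifP => // _; by rewrite normr0.
have bn w : `|hn w| <= `|h w|.
  rewrite /hn mx; case: ifP => _; last by rewrite normr0.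
  by rewrite sub0r normrN.
have ip Z : measurable_fun setT Z -> P.-integrable setT (fun w => (h w * Z w)%:E) ->
    P.-integrable setT (fun w => (hp w * Z w)%:E).
  by move=> mZ; apply: int_dom => //; exact: FT_O.
have inn Z : measurable_fun setT Z -> P.-integrable setT (fun w => (h w * Z w)%:E) ->
    P.-integrable setT (fun w => (hn w * Z w)%:E).
  by move=> mZ; apply: int_dom => //; exact: FT_O.
have split Z : measurable_fun setT Z -> P.-integrable setT (fun w => (h w * Z w)%:E) ->
    (\int[P]_w (h w * Z w)%:E = \int[P]_w (hp w * Z w)%:E - \int[P]_w (hn w * Z w)%:E)%E.
  move=> mZ iZ; rewrite -integralB //; [|exact: ip|exact: inn].
  by apply: eq_integral => w _; rewrite /= e mulrBl EFinB.
rewrite (split X) // (split Y) //.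
have p0 w : 0 <= hp w by rewrite /hp mx; case: ifP.
have n0 w : 0 <= hn w by rewrite /hn mx; case: ifP.
rewrite (cond_pos_main _ _ hc _ (FT_wrt _ hpF) p0) ?(ip X) ?(ip Y) //.
by rewrite (cond_pos_main _ _ hc _ (FT_wrt _ hnF) n0) ?(inn X) ?(inn Y).
Qed.

Section Trunc.
Variable (N : O -> R).
Hypothesis mN : measurable_fun (setT : set FT) (N : FT -> R).
Let A (n : nat) : set O := [set w | N w <= n%:R].

Lemma A_meas n : measurable (A n : set FT).
Proof.
have := mN measurableT _ (measurable_itv `]-oo, n%:R]); rewrite setTI.
congr measurable; apply/seteqP; split => w /=; by rewrite in_itv /=.
Qed.

Lemma trunc_cvg (S : O -> R) : P.-integrable setT (fun w => (S w)%:E) ->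
  (\int[P]_w (\1_(A n) w * S w)%:E)%E @[n --> \oo] --> (\int[P]_w (S w)%:E)%E.
Proof.
move=> iS.
have mS : measurable_fun setT S by move/integrableP: iS => [/mEF' ? _].
have h1 : forall n, measurable_fun setT (fun w : O => (\1_(A n) w * S w)%:E).
  move=> n; apply: mEF; apply: meas_indicX => //; apply: FT_Oset; exact: A_meas.
have h2 : measurable_fun setT (fun w => (S w)%:E) by move/integrableP: iS => [].
have h3 : {ae P, forall w, setT w -> (fun n => (\1_(A n) w * S w)%:E) n @[n --> \oo] --> (S w)%:E}.
  apply: aeW => w _; apply: cvg_near_cst.
  near=> n; rewrite indicE mem_set ?mul1r //.
  by rewrite /A /=; near: n; exact: nbhs_infty_ger.
have h4 : P.-integrable setT (fun w => `|(S w)%:E|)%E by exact: integrable_abse.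
have h5 : {ae P, forall w n, setT w -> (`|(\1_(A n) w * S w)%:E| <= `|(S w)%:E|)%E}.
  apply: aeW => w n _; rewrite !abse_EFin lee_fin normrM indicE.
  by case: (w \in A n); rewrite /= ?normr1 ?normr0 ?mul1r ?mul0r.
by case: (@dominated_convergence _ O R P setT measurableT _ _ _ h1 h2 h3 h4 h5).
Unshelve. all: by end_near.
Qed.
End Trunc.

Lemma cond_dot d (X Y Z : O -> 'I_d -> R) :
  (forall i, is_cond_exp P <<s G0>> (fun w => X w i) (fun w => Y w i)) ->
  (forall i, measurable_wrt <<s G0>> (fun w => Z w i)) ->
  P.-integrable setT (fun w => (\sum_i Z w i * X w i)%:E) ->
  P.-integrable setT (fun w => (\sum_i Z w i * Y w i)%:E) ->
  (\int[P]_w (\sum_i Z w i * X w i)%:E = \int[P]_w (\sum_i Z w i * Y w i)%:E)%E.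
Proof.
move=> hc hZ iSX iSY.
pose N w := \sum_(i < d) (`|Z w i| + `|Y w i|).
have mYF i : measurable_fun (setT : set FT) ((fun w => Y w i) : FT -> R).
  by apply: wrt_FT; case: (hc i) => _ [].
have mN : measurable_fun (setT : set FT) (N : FT -> R).
  apply: measurable_sum => i; apply: measurable_funD.
  - by apply: measurableT_comp => //; exact: wrt_FT.
  - by apply: measurableT_comp => //; exact: mYF.
pose A (n : nat) : set O := [set w | N w <= n%:R].
have mA n : measurable (A n : set FT) by exact: A_meas.
have leN w i : `|Z w i| + `|Y w i| <= N w.
  rewrite /N (bigD1 i) //= lerDl; apply: sumr_ge0 => j _; by rewrite addr_ge0.
have bZ n w i : `|\1_(A n) w * Z w i| <= n%:R.
  rewrite normrM indicE; case: (boolP (w \in A n)) => /= wA; last by rewrite normr0 mul0r.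
  rewrite normr1 mul1r; move: wA; rewrite inE /A /= => wA.
  by apply: le_trans wA; apply: le_trans (leN w i); rewrite lerDl.
have bY n w i : (\1_(A n) w : R) != 0 -> `|Y w i| <= n%:R.
  rewrite indicE; case: (boolP (w \in A n)) => /= wA; last by rewrite eqxx.
  move=> _; move: wA; rewrite inE /A /= => wA.
  by apply: le_trans wA; apply: le_trans (leN w i); rewrite lerDr.
have mXi i : measurable_fun setT (fun w => X w i).
  by case: (hc i) => /integrableP [/mEF' ? _] _.
have mYi i : measurable_fun setT (fun w => Y w i) by apply: FT_O; exact: mYF.
have mZi i : measurable_fun setT (fun w => Z w i) by exact: wrt_O.
have mh n i : measurable_fun setT (fun w => \1_(A n) w * Z w i).
  by apply: meas_indicX => //; apply: FT_Oset; exact: mA.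
have iX n i : P.-integrable setT (fun w => (\1_(A n) w * Z w i * X w i)%:E).
  apply: le_integrable (integrableZl measurableT n%:R (proj1 (hc i))) => //.
  - by apply: mEF; apply: measurable_funM => //; exact: mh.
  - move=> w _; rewrite !abse_EFin lee_fin normrM normrM.
    by rewrite ler_wpM2r // (le_trans (bZ n w i)) // ler_norm.
have iY n i : P.-integrable setT (fun w => (\1_(A n) w * Z w i * Y w i)%:E).
  apply: le_integrable (finite_measure_integrable_cst P (n%:R * n%:R) measurableT) => //.
  - by apply: mEF; apply: measurable_funM => //; exact: mh.
  - move=> w _; rewrite !abse_EFin lee_fin /= normrM.
    have [z|nz] := eqVneq (\1_(A n) w : R) 0.
      by rewrite z mul0r normr0 mul0r ger0_norm // mulr_ge0.
    rewrite [X in _ <= X]ger0_norm ?mulr_ge0 //.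
    by apply: ler_pM => //; exact: (bY n w i nz).
have seq_eq n : (\int[P]_w (\1_(A n) w * \sum_i Z w i * X w i)%:E =
                 \int[P]_w (\1_(A n) w * \sum_i Z w i * Y w i)%:E)%E.
  have e (V : O -> 'I_d -> R) : (fun w => (\1_(A n) w * \sum_i Z w i * V w i)%:E) =
      (fun w => \sum_i (\1_(A n) w * Z w i * V w i)%:E)%E.
    apply: funext => w; rewrite sumEFin mulr_sumr; congr (_%:E).
    by apply: eq_bigr => i _; rewrite mulrA.
  rewrite (e X) (e Y) !integral_sum //.
  apply: eq_bigr => i _.
  apply: cond_gen => //.
  by apply: FT_wrt; apply: measurable_funM => //; exact: wrt_FT.
have cX := trunc_cvg _ mN _ iSX.
have cY := trunc_cvg _ mN _ iSY.
have e2 : (fun n => \int[P]_w (\1_(A n) w * \sum_i Z w i * X w i)%:E)%E =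
          (fun n => \int[P]_w (\1_(A n) w * \sum_i Z w i * Y w i)%:E)%E.
  by apply: funext => n; exact: seq_eq.
rewrite e2 in cX; exact: (cvg_unique _ cX cY).
Qed.
End CE.

Section Step.
Context {R : realType}.
Lemma ce_step (dO : measure_display) (O : measurableType dO)
  (P : probability O R) (d : nat) (F : 'rV[R]_d -> R)
  (x g : nat -> O -> 'rV[R]_d) (eta : nat -> O -> R) (t : nat) (u : 'rV[R]_d) :
  (1 <= t)%N ->
  (forall t (i : 'I_d), measurable_fun setT (fun w => x t w ord0 i)) ->
  (forall t (i : 'I_d), measurable_fun setT (fun w => g t w ord0 i)) ->
  (forall i : 'I_d,
     is_cond_exp P (filt x g t) (fun w => g t w ord0 i)
                               (fun w => grad F (x t w) ord0 i)) ->
  measurable_wrt (filt x g t) (eta t) ->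
  P.-integrable setT (fun w => (eta t w * dotv (grad F (x t w)) (x t w - u))%:E) ->
  P.-integrable setT (fun w => (eta t w * dotv (g t w) (x t w - u))%:E) ->
  (\int[P]_w (eta t w * dotv (grad F (x t w)) (x t w - u))%:E =
   \int[P]_w (eta t w * dotv (g t w) (x t w - u))%:E)%E.
Proof.
move=> t1 mx mg hce metaF iG iS.
set S := [set f : O -> R | exists s (i : 'I_d),
     ((1 <= s <= t)%N /\ f = (fun w => x s w ord0 i)) \/
     ((1 <= s < t)%N /\ f = (fun w => g s w ord0 i))].
set G0 := [set A | exists f, S f /\ exists B : set R, measurable B /\ A = f @^-1` B].
have HG : G0 `<=` measurable.
  move=> _ [f [[s [i [[_ ->]|[_ ->]]]] [B [mB ->]]]].
  - by have := mx s i measurableT B mB; rewrite setTI.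
  - by have := mg s i measurableT B mB; rewrite setTI.
have fE : filt x g t = <<s G0>> by [].
rewrite fE in hce metaF.
have mxw i : measurable_wrt <<s G0>> (fun w => x t w ord0 i).
  move=> B mB; apply: sub_sigma_algebra; exists (fun w => x t w ord0 i); split; last by exists B.
  by exists t, i; left; rewrite t1 leqnn.
pose Z w (i : 'I_d) := eta t w * (x t w - u) ord0 i.
have e (a : O -> 'rV[R]_d) : (fun w => (eta t w * dotv (a w) (x t w - u))%:E) =
    (fun w => (\sum_i Z w i * a w ord0 i)%:E).
  apply: funext => w; rewrite /dotv mulr_sumr; congr (_%:E); apply: eq_bigr => i _.
  by rewrite /Z [a w ord0 i * _]mulrC mulrA.
rewrite (e (fun w => grad F (x t w))) (e (g t)).
rewrite (e (fun w => grad F (x t w))) in iG; rewrite (e (g t)) in iS.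
symmetry; apply: (@cond_dot R dO O P G0 HG d (fun w i => g t w ord0 i) (fun w i => grad F (x t w) ord0 i) Z) => //.
move=> i; apply: FT_wrt => //; apply: measurable_funM.
  exact: wrt_FT.
rewrite /Z /=.
have -> : (fun w => (x t w - u) ord0 i) = (fun w => x t w ord0 i - u ord0 i).
  by apply: funext => w; rewrite !mxE.
by apply: measurable_funB; [exact: wrt_FT|exact: measurable_cst].
Qed.
End Step.


Theorem lemma2 (R : realType) (dO : measure_display) (O : measurableType dO)
  (P : probability O R) (d : nat) (G : R)
  (F : 'rV[R]_d -> R)
  (x g : nat -> O -> 'rV[R]_d) (eta : nat -> O -> R)
  (phi : nat -> O -> 'rV[R]_d -> R) (phi1 : 'rV[R]_d -> R)
  (T : nat) (u : 'rV[R]_d) :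
  0 < G ->
  (forall y, differentiable F y) ->
  (* x_t and g_t are random vectors *)
  (forall t (i : 'I_d), measurable_fun setT (fun w => x t w ord0 i)) ->
  (forall t (i : 'I_d), measurable_fun setT (fun w => g t w ord0 i)) ->
  (* E[g_t | F_t] = grad F (x_t) *)
  (forall t, (1 <= t)%N -> forall i : 'I_d,
     is_cond_exp P (filt x g t) (fun w => g t w ord0 i)
                               (fun w => grad F (x t w) ord0 i)) ->
  (* ||g_t|| <= G almost surely *)
  (forall t, (1 <= t)%N -> {ae P, forall w, enorm (g t w) <= G}) ->
  (* eta_t non-negative, F_t-measurable *)
  (forall t, (1 <= t)%N -> forall w, 0 <= eta t w) ->
  (forall t, (1 <= t)%N -> measurable_wrt (filt x g t) (eta t)) ->
  (* phi_t is F_t-measurable, phi_1 is deterministic *)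
  (forall t, (1 <= t)%N -> forall y, measurable_wrt (filt x g t) (fun w => phi t w y)) ->
  (forall w, phi 1%N w = phi1) ->
  (* regularizers convex and differentiable *)
  (forall t, (1 <= t)%N -> forall w, convex_fun (phi t w)) ->
  (forall t, (1 <= t)%N -> forall w y, differentiable (phi t w) y) ->
  (* x_t in argmin H_t *)
  (forall t, (1 <= t)%N -> forall w y,
     Hfun phi eta g t w (x t w) <= Hfun phi eta g t w y) ->
  (* phi_1 attains its minimum *)
  (exists x0, forall y, phi1 x0 <= phi1 y) ->
  (* all expectations are finite *)
  P.-integrable setT (fun w => (bregman (phi T.+1 w) u (x T.+1 w))%:E) ->
  P.-integrable setT (fun w => (phi T.+1 w u)%:E) ->
  (forall t, (1 <= t <= T)%N ->
     P.-integrable setT (fun w => (eta t w * dotv (grad F (x t w)) (x t w - u))%:E)) ->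
  (forall t, (1 <= t <= T)%N ->
     P.-integrable setT (fun w => (eta t w * dotv (g t w) (x t w - u))%:E)) ->
  (* H_t(x_t) - H_{t+1}(x_{t+1}) + <l_t, x_t> <= 0 *)
  (forall t, (1 <= t)%N -> forall w,
     Hfun phi eta g t w (x t w) - Hfun phi eta g t.+1 w (x t.+1 w)
       + dotv (eta t w *: g t w) (x t w) <= 0) ->
  ((\int[P]_w (bregman (phi T.+1 w) u (x T.+1 w))%:E
    + \sum_(1 <= t < T.+1)
        \int[P]_w (eta t w * dotv (grad F (x t w)) (x t w - u))%:E
    <= \int[P]_w (phi T.+1 w u)%:E - (minval phi1)%:E)%E
  /\
  (\sum_(1 <= t < T.+1)
        \int[P]_w (eta t w * dotv (grad F (x t w)) (x t w - u))%:E
    <= \int[P]_w (phi T.+1 w u)%:E - (minval phi1)%:E)%E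
  /\
  ((forall y, 0 <= dotv (grad F y) (y - u)) ->
   (\int[P]_w (bregman (phi T.+1 w) u (x T.+1 w))%:E
    <= \int[P]_w (phi T.+1 w u)%:E - (minval phi1)%:E)%E)).
Proof.
move=> _ _ mx mg hce _ eta0 metaF _ phi1E _ dphi hmin hmin1 iB iP iG iS htel.
have pw w := @pw_ineq R O d x g eta phi phi1 T u w phi1E dphi hmin hmin1 htel.
have ce t : (1 <= t <= T)%N ->
   (\int[P]_w (eta t w * dotv (grad F (x t w)) (x t w - u))%:E =
   \int[P]_w (eta t w * dotv (g t w) (x t w - u))%:E)%E.
  move=> /andP[t1 tT]; apply: ce_step => //.
  - by move=> i; apply: hce.
  - by apply: metaF.
  - by apply: iG; rewrite t1.
  - by apply: iS; rewrite t1.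
have part1 : (\int[P]_w (bregman (phi T.+1 w) u (x T.+1 w))%:E
    + \sum_(1 <= t < T.+1)
        \int[P]_w (eta t w * dotv (grad F (x t w)) (x t w - u))%:E
    <= \int[P]_w (phi T.+1 w u)%:E - (minval phi1)%:E)%E.
  rewrite (eq_big_nat _ _ (F2 := (fun t => \int[P]_w (eta t w * dotv (g t w) (x t w - u))%:E)%E)); last first.
    by move=> i /andP[i1 iT]; apply: ce; rewrite i1 -ltnS iT.
  have iSum : P.-integrable setT (fun w => \sum_(1 <= k < T.+1) (eta k w * dotv (g k w) (x k w - u))%:E)%E.
    by apply: integrable_sum_nat => i /andP[i1 iT]; apply: iS; rewrite i1 -ltnS iT.
  rewrite -integral_sum_nat; last by move=> i /andP[i1 iT]; apply: iS; rewrite i1 -ltnS iT.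
  rewrite -integralD //.
  have -> : ((minval phi1)%:E = \int[P]_w (cst (minval phi1)%:E) w)%E.
    rewrite integral_cst // -[LHS]mule1; congr (_ * _)%E; symmetry; exact: probability_setT.
  rewrite -integralB //; last exact: (finite_measure_integrable_cst P (minval phi1) measurableT).
  apply: le_integral => //.
  - exact: integrableD.
  - by apply: integrableB => //; exact: (finite_measure_integrable_cst P (minval phi1) measurableT).
  move=> w _ /=.
  rewrite sumEFin -EFinD -EFinD lee_fin.
  by case: (pw w).
split => //; split.
  apply: le_trans part1; apply: lee_paddl => //.
  by apply: integral_ge0 => w _; rewrite lee_fin; case: (pw w).
move=> hF; apply: le_trans part1; rewrite leeDl //.
rewrite big_nat_cond; apply: sume_ge0 => t /andP[/andP[t1 _] _]; apply: integral_ge0 => w _.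
by rewrite lee_fin; apply: mulr_ge0; [exact: eta0|exact: hF].
Qed.
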